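(* For every $N\ge1$ and positive integers $n_0,\dots,n_N$, the maximum diversity gain of the $(n_0,\dots,n_N)$ Rayleigh product channel satisfies $$\frac{\tilde n_0\tilde n_1}{2}<d(0)\le\tilde n_0\tilde n_1 .$$
   Context: $\tilde n_0\le\cdots\le\tilde n_N$ is the nondecreasing rearrangement of $(n_0,\dots,n_N)$, $c_i=1-i+\min_{k=1,\dots,N}\lfloor(\sum_{l=0}^{k}\tilde n_l-i)/k\rfloor$ for $i=1,\dots,\tilde n_0$, and $d(0)=\sum_{i=1}^{\tilde n_0}c_i$, which is the maximum diversity gain of the Rayleigh product channel $\mathbf y=\sqrt{\mathsf{SNR}/(n_1\cdots n_N)}\mathbf H_1\cdots\mathbf H_N\mathbf x+\mathbf z$ with independent i.i.d. $\mathcal{CN}(0,1)$ matrices $\mathbf H_i\in\mathbb C^{n_{i-1}\times n_i}$. *)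

(* Defs.v *)
From HB Require Import structures.
From mathcomp Require Import all_boot all_order all_algebra.
Set Implicit Arguments. Unset Strict Implicit. Unset Printing Implicit Defensive.
Import Order.TTheory GRing.Theory Num.Theory.
Local Open Scope ring_scope.

(* ns = [:: n_0; ...; n_N] : the dimensions of the Rayleigh product channel. *)

Definition ntilde (ns : seq nat) (l : nat) : nat :=
  nth 0%N (sort leq ns) l.

Definition Nmat (ns : seq nat) : nat := (size ns).-1.

(* floor((sum_{l=0}^k \tilde n_l - i)/k), computed in int (floor division
   for a positive divisor k). *)
Definition fk (ns : seq nat) (i k : nat) : int :=
  ((\sum_(0 <= l < k.+1) (ntilde ns l)%:Z - i%:Z) %/ k%:Z)%Z.

(* min_{k=1,...,N} fk ns i k  (for N >= 1). *)
Definition minfk (ns : seq nat) (i : nat) : int :=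
  foldr (fun k m => Order.min (fk ns i k) m) (fk ns i 1%N)
        (iota 2 (Nmat ns).-1).

Definition c_coef (ns : seq nat) (i : nat) : int :=
  1 - i%:Z + minfk ns i.

Definition d0 (ns : seq nat) : int :=
  \sum_(1 <= i < (ntilde ns 0).+1) c_coef ns i.

(* Main.v *)
Require Import Defs.
From HB Require Import structures.
From Stdlib Require Import Lia Psatz.
From mathcomp Require Import all_boot all_order all_algebra.
Import Order.TTheory GRing.Theory Num.Theory.
Local Open Scope ring_scope.

Lemma foldr_min_le (f : nat -> int) x s : foldr (fun k m => Order.min (f k) m) x s <= x.
Proof. elim: s => //= k s IH; rewrite ge_min IH orbT //. Qed.

Lemma foldr_min_ge (f : nat -> int) x s y :
  y <= x -> (forall k, k \in s -> y <= f k) ->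
  y <= foldr (fun k m => Order.min (f k) m) x s.
Proof.
move=> yx; elim: s => //= k s IH H; rewrite le_min H ?mem_head //= IH //.
by move=> j js; apply: H; rewrite in_cons js orbT.
Qed.

Lemma sum_int_nat (F : nat -> nat) m n :
  \sum_(m <= l < n) (F l)%:Z = (\sum_(m <= l < n) F l)%N%:Z.
Proof. by elim/big_rec2: _ => // i x y _ ->; rewrite PoszD. Qed.

Lemma fk1 ns i : fk ns i 1 = (ntilde ns 0)%:Z + (ntilde ns 1)%:Z - i%:Z.
Proof.
by rewrite /fk divz1 !big_nat_recr //= big_geq // add0r.
Qed.

Lemma c_eq ns i : c_coef ns i + i%:Z = 1 + minfk ns i.
Proof. by rewrite /c_coef addrAC subrK. Qed.

Lemma c_upper ns i :
  c_coef ns i + (i + i)%N%:Z <= (ntilde ns 0 + ntilde ns 1 + 1)%N%:Z.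
Proof.
rewrite PoszD addrA c_eq /minfk.
have := foldr_min_le (fk ns i) (fk ns i 1) (iota 2 (Nmat ns).-1).
rewrite fk1 => H.
rewrite -addrA -(lerD2l (-1)) !addrA addNr !add0r.
rewrite [X in _ <= X]/= -(lerD2r (- i%:Z)) addrK PoszD.
rewrite [-1 + _]addrC addrK PoszD. exact: H.
Qed.

Lemma gauss a : ((\sum_(1 <= i < a.+1) (i + i))%N = a * a.+1)%N.
Proof.
elim: a => [|a IH]; first by rewrite big_geq.
rewrite big_nat_recr //= IH -!plusE -!multE; lia.
Qed.

Lemma nt_mono ns l m : (m < size ns)%N -> (l <= m)%N -> (ntilde ns l <= ntilde ns m)%N.
Proof.
move=> hm hlm; rewrite /ntilde.
apply: (sorted_leq_nth leq_trans leqnn 0%N (sort_sorted leq_total ns)) => //;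
  rewrite inE size_sort //; exact: leq_ltn_trans hlm hm.
Qed.

Lemma nt_pos ns l : all (fun m => 0 < m)%N ns -> (l < size ns)%N -> (0 < ntilde ns l)%N.
Proof.
move=> /allP H hl; apply: H; rewrite -(mem_sort leq) /ntilde mem_nth // size_sort //.
Qed.

Lemma sum_tail ns k : (k < size ns)%N ->
  (k * ntilde ns 1 <= \sum_(1 <= l < k.+1) ntilde ns l)%N.
Proof.
elim: k => [|k IH] hk; first by rewrite mul0n.
rewrite big_nat_recr //= mulSn addnC; apply: leq_add.
  by apply: IH; apply: ltnW.
by apply: nt_mono.
Qed.

Lemma fk_ge ns i k : (1 <= k)%N -> (k < size ns)%N -> (i <= ntilde ns 0)%N ->
  (ntilde ns 1)%:Z <= fk ns i k.
Proof.
move=> k1 hk hi; rewrite /fk lez_divRL ?ltz_nat // sum_int_nat lerBrDr -PoszM -PoszD lez_nat.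
rewrite big_ltn // mulnC addnC; apply: leq_add => //; exact: sum_tail.
Qed.

Lemma minfk_ge N ns i : (1 <= N)%N -> size ns = N.+1 -> (i <= ntilde ns 0)%N ->
  (ntilde ns 1)%:Z <= minfk ns i.
Proof.
move=> N1 hs hi; rewrite /minfk; apply: foldr_min_ge.
  by apply: fk_ge => //; rewrite hs.
move=> k; rewrite mem_iota /Nmat hs /= => /andP [k2 kN].
apply: fk_ge => //; first exact: ltnW.
rewrite hs; move: kN; case: N N1 {hs} => // N _ /=; rewrite add2n ltnS => /ltnW; done.
Qed.

Theorem corollary3 (N : nat) (ns : seq nat) :
  (1 <= N)%N -> size ns = N.+1 -> all (fun m => 0 < m)%N ns ->
  ((ntilde ns 0 * ntilde ns 1)%:R / 2 : rat) < (d0 ns)%:~R /\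
  d0 ns <= (ntilde ns 0 * ntilde ns 1)%:Z.
Proof.
move=> N1 hs hpos.
set a := ntilde ns 0; set b := ntilde ns 1.
have a0 : (0 < a)%N by apply: nt_pos; rewrite // hs.
have ab : (a <= b)%N by apply: nt_mono; rewrite // hs.
have G : \sum_(1 <= i < a.+1) ((i + i)%N%:Z) = (a * a.+1)%N%:Z by rewrite sum_int_nat gauss.
split.
- have L : \sum_(1 <= i < a.+1) ((b + 1 + (b + 1))%N%:Z)
      <= \sum_(1 <= i < a.+1) (c_coef ns i + c_coef ns i + (i + i)%N%:Z).
    apply: ler_sum_nat => i /andP [i1 ia].
    have := @minfk_ge N ns i N1 hs ia; rewrite -/b => H.
    have H2 : (b + 1)%N%:Z <= c_coef ns i + i%:Z by rewrite c_eq PoszD addrC lerD2l.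
    rewrite [(i + i)%N%:Z]PoszD addrACA [(b + 1 + (b + 1))%N%:Z]PoszD.
    exact: lerD.
  rewrite big_split /= G sum_int_nat sum_nat_const_nat big_split /= subn1 /= in L.
  have K : (a * b + a * a.+1 < a * (b + 1 + (b + 1)))%N.
    have H' : (a * a <= a * b)%N by rewrite leq_mul2l ab orbT.
    move/ssrnat.leP: H'; move/ssrnat.leP: a0 => a0' H'; apply/ssrnat.leP.
    rewrite -!plusE -!multE in H' a0' *; nia.
  have I : (a * b)%N%:Z < d0 ns + d0 ns.
    rewrite -(ltrD2r (a * a.+1)%N%:Z); apply: lt_le_trans L.
    by rewrite -PoszD ltz_nat.
  rewrite ltr_pdivrMr // mulr_natr mulr2n -intrD -[X in X < _]/(((a * b)%N%:Z)%:~R : rat) ltr_int.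
  exact: I.
- have L : \sum_(1 <= i < a.+1) (c_coef ns i + (i + i)%N%:Z)
      <= \sum_(1 <= i < a.+1) ((a + b + 1)%N%:Z) by apply: ler_sum_nat => i _; exact: c_upper.
  rewrite big_split /= G sum_int_nat sum_nat_const_nat subn1 /= in L.
  have E : (a * (a + b + 1) = a * b + a * a.+1)%N.
    rewrite -!plusE -!multE; lia.
  by rewrite E PoszD lerD2r in L.
Qed.
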